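(* Let $\delta:\,]0,+\infty[\to\mathbb R$ be nonnegative, bounded and continuously differentiable, and let $r:\,]\alpha,\omega[\to\,]0,+\infty[$ be a solution of $\ddot r+\delta(r)\dot r=-1/r^2$ which is maximal both to the left and to the right, with energy $h(t)=\frac12\dot r(t)^2-\frac1{r(t)}$. If $\omega<+\infty$ and $h(\omega):=\lim_{t\uparrow\omega}h(t)>-\infty$, then $\lim_{t\uparrow\omega}\dfrac{r(t)}{(\omega-t)^{2/3}}=\sqrt[3]{9/2}$.
   Context: The energy $h$ is nonincreasing along solutions, so the limit $h(\omega)$ exists in $[-\infty,+\infty[$. *)

(* Defs.v *)
From Stdlib Require Import Reals.
From Coquelicot Require Import Coquelicot.
Open Scope R_scope.

Definition admissible_delta (delta : R -> R) : Prop :=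
  (forall x, 0 < x -> 0 <= delta x) /\
  (exists M, forall x, 0 < x -> Rabs (delta x) <= M) /\
  (forall x, 0 < x -> ex_derive delta x /\ continuous (Derive delta) x).

Definition is_solution (delta : R -> R) (a b : Rbar) (r : R -> R) : Prop :=
  forall t, Rbar_lt a t -> Rbar_lt t b ->
    0 < r t /\ ex_derive r t /\ ex_derive (Derive r) t /\
    Derive (Derive r) t + delta (r t) * Derive r t = - / (r t ^ 2).

Definition maximal_right (delta : R -> R) (a b : Rbar) (r : R -> R) : Prop :=
  forall b' : Rbar, Rbar_lt b b' ->
    ~ (exists s, is_solution delta a b' s /\
         forall t, Rbar_lt a t -> Rbar_lt t b -> s t = r t).

Definition maximal_left (delta : R -> R) (a b : Rbar) (r : R -> R) : Prop :=
  forall a' : Rbar, Rbar_lt a' a ->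
    ~ (exists s, is_solution delta a' b s /\
         forall t, Rbar_lt a t -> Rbar_lt t b -> s t = r t).

Definition energy (r : R -> R) (t : R) : R :=
  / 2 * (Derive r t) ^ 2 - / r t.

(* Main.v *)
Require Import Defs.
From Stdlib Require Import Reals Lra Lia Classical.
From Coquelicot Require Import Coquelicot.
Open Scope R_scope.


Lemma ball_R (x e y : R) : ball x e y <-> Rabs (y - x) < e.
Proof. reflexivity. Qed.

Lemma cont_eps (f : R -> R) x :
  continuous f x <-> (forall eps, 0 < eps -> exists d, 0 < d /\ forall y, Rabs (y - x) < d -> Rabs (f y - f x) < eps).
Proof.
  split.
  - intros H eps He. destruct (proj1 (filterlim_locally f (f x)) H (mkposreal eps He)) as [d Hd].
    exists d; split; [apply cond_pos|]. intros y Hy. apply (Hd y). exact Hy.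
  - intros H. apply filterlim_locally. intros eps.
    destruct (H eps (cond_pos eps)) as [d [Hd H']]. exists (mkposreal d Hd). intros y Hy. apply H'. exact Hy.
Qed.

Lemma left_lim_eps (f : R -> R) w l :
  filterlim f (at_left w) (locally l) <->
  (forall eps, 0 < eps -> exists d, 0 < d /\ forall t, w - d < t < w -> Rabs (f t - l) < eps).
Proof.
  split.
  - intros H eps He. destruct (proj1 (filterlim_locally f l) H (mkposreal eps He)) as [d Hd].
    exists d; split; [apply cond_pos|]. intros t Ht. apply (Hd t).
    apply ball_R. rewrite Rabs_left; lra. lra.
  - intros H. apply filterlim_locally. intros eps.
    destruct (H eps (cond_pos eps)) as [d [Hd H']]. exists (mkposreal d Hd). intros y Hy Hy'.
    apply H'. change (Rabs (y - w) < d) in Hy. rewrite Rabs_left in Hy; lra.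
Qed.


Lemma pow2_pos n : 0 < 2 ^ n.
Proof. apply pow_lt; lra. Qed.

Lemma pow2_ge n : INR n <= 2 ^ n.
Proof.
  induction n. simpl; lra. rewrite S_INR. simpl.
  assert (1 <= 2 ^ n). { clear IHn; induction n; simpl; lra. } lra.
Qed.

Lemma small_pow2 C eps : 0 < eps -> exists n, C / 2 ^ n < eps.
Proof.
  intros He. destruct (INR_unbounded (Rabs C / eps)) as [k H1].
  exists k.
  pose proof (pow2_ge k) as H. pose proof (pow2_pos k).
  apply Rle_lt_trans with (Rabs C / 2 ^ k).
  { unfold Rdiv. apply Rmult_le_compat_r. left; apply Rinv_0_lt_compat; lra. apply Rle_abs. }
  apply Rmult_lt_reg_r with (2 ^ k); [lra|]. unfold Rdiv. rewrite Rmult_assoc, Rinv_l by lra.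
  rewrite Rmult_1_r. apply Rmult_lt_reg_r with (/ eps). apply Rinv_0_lt_compat; lra.
  replace (eps * 2 ^ k * / eps) with (2 ^ k) by (field; lra). fold (Rabs C / eps). lra.
Qed.

Lemma zero_pow2 x C : (forall n, Rabs x <= C / 2 ^ n) -> x = 0.
Proof.
  intros H. destruct (Req_dec x 0) as [|Hx]; auto. exfalso.
  assert (0 < Rabs x) by (apply Rabs_pos_lt; auto).
  destruct (small_pow2 C (Rabs x) H0) as [n Hn]. specialize (H n). apply (Rlt_irrefl (Rabs x)). eapply Rle_lt_trans; eauto.
Qed.

Lemma RInt_bound f a b B : ex_RInt f a b ->
  (forall s, Rmin a b <= s <= Rmax a b -> Rabs (f s) <= B) ->
  Rabs (RInt f a b) <= Rabs (b - a) * B.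
Proof.
  intros Hex Hb. destruct (Rle_dec a b) as [Hab|Hab].
  - rewrite (Rabs_right (b - a)) by lra. apply abs_RInt_le_const; auto.
    intros t Ht. apply Hb. rewrite Rmin_left, Rmax_right; lra.
  - rewrite <- (opp_RInt_swap f b a) by (apply ex_RInt_swap; auto). change (opp (RInt f b a)) with (- RInt f b a).
    rewrite Rabs_Ropp. rewrite (Rabs_left (b - a)) by lra. replace (- (b - a)) with (a - b) by ring.
    apply abs_RInt_le_const; [lra| |].
    apply ex_RInt_swap; auto.
    intros t Ht. apply Hb. rewrite Rmin_right, Rmax_left; lra.
Qed.

Lemma int_deriv (g : R -> R) a t : (forall s, continuous g s) -> is_derive (fun t => RInt g a t) t (g t).
Proof.
  intros Hc. apply (is_derive_RInt g (fun t => RInt g a t) a t); auto. exists (mkposreal 1 Rlt_0_1). intros y _.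
  apply (RInt_correct (V := R_CompleteNormedModule)). apply ex_RInt_continuous. intros; auto.
Qed.

Lemma lip_cont (F : R -> R -> R) K (u v : R -> R) (t : R) :
  (forall x y x' y', Rabs (F x y - F x' y') <= K * (Rabs (x - x') + Rabs (y - y'))) ->
  continuous u t -> continuous v t -> continuous (fun s => F (u s) (v s)) t.
Proof.
  intros HL Hu Hv. apply cont_eps. intros eps He.
  set (K' := Rabs K + 1).
  assert (HK' : 0 < K') by (unfold K'; pose proof (Rabs_pos K); lra).
  destruct (proj1 (cont_eps u t) Hu (eps / (2 * K'))) as [d1 [Hd1 H1]].
  { apply Rdiv_lt_0_compat; lra. }
  destruct (proj1 (cont_eps v t) Hv (eps / (2 * K'))) as [d2 [Hd2 H2]].
  { apply Rdiv_lt_0_compat; lra. }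
  exists (Rmin d1 d2). split. apply Rmin_pos; auto.
  intros y Hy. specialize (H1 y (Rlt_le_trans _ _ _ Hy (Rmin_l _ _))).
  specialize (H2 y (Rlt_le_trans _ _ _ Hy (Rmin_r _ _))).
  eapply Rle_lt_trans. apply HL.
  apply Rle_lt_trans with (K' * (Rabs (u y - u t) + Rabs (v y - v t))).
  apply Rmult_le_compat_r. pose proof (Rabs_pos (u y - u t)); pose proof (Rabs_pos (v y - v t)); lra.
  unfold K'; pose proof (Rle_abs K); lra.
  apply Rlt_le_trans with (K' * (eps / (2 * K') + eps / (2 * K'))).
  apply Rmult_lt_compat_l; lra. right; field; lra.
Qed.

Lemma der_int_plus (g : R -> R) c a t : (forall s, continuous g s) ->
  is_derive (fun t => c + RInt g a t) t (g t).
Proof.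
  intros Hc. replace (g t) with (0 + g t) by ring. apply is_derive_Reals.
  apply (derivable_pt_lim_plus (fun _ => c) (fun t => RInt g a t)).
  apply derivable_pt_lim_const. apply is_derive_Reals, int_deriv; auto.
Qed.

Lemma cont_int_plus (g : R -> R) c a t : (forall s, continuous g s) ->
  continuous (fun t => c + RInt g a t) t.
Proof. intros Hc. apply (ex_derive_continuous (K := R_AbsRing) (V := R_NormedModule)). eexists. apply der_int_plus; auto. Qed.

Lemma der_int_plus_loc (g : R -> R) c a h t :
  (forall s, Rabs (s - a) < h -> continuous g s) -> Rabs (t - a) < h ->
  is_derive (fun t => c + RInt g a t) t (g t).
Proof.
  intros Hc Ht. replace (g t) with (0 + g t) by ring. apply is_derive_Reals.
  apply (derivable_pt_lim_plus (fun _ => c) (fun t => RInt g a t)).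
  apply derivable_pt_lim_const. apply is_derive_Reals.
  apply (is_derive_RInt g (fun t => RInt g a t) a t); auto.
  assert (Hp : 0 < h - Rabs (t - a)) by lra.
  exists (mkposreal _ Hp). intros y Hy. change (Rabs (y - t) < h - Rabs (t - a)) in Hy.
  apply (RInt_correct (V := R_CompleteNormedModule)). apply ex_RInt_continuous.
  intros z Hz. apply Hc. unfold Rmin, Rmax in Hz. destruct (Rle_dec a y);
  revert Hy; unfold Rabs; repeat destruct Rcase_abs; intros; lra.
Qed.

Lemma abs_sub_tri a b c : Rabs (a - c) <= Rabs (a - b) + Rabs (b - c).
Proof. replace (a - c) with ((a - b) + (b - c)) by ring. apply Rabs_triang. Qed.

Lemma between_abs a t s : Rmin a t <= s <= Rmax a t -> Rabs (s - a) <= Rabs (t - a).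
Proof. intros Hs. unfold Rmin, Rmax in Hs. destruct (Rle_dec a t); unfold Rabs; repeat destruct Rcase_abs; lra. Qed.


Definition LipP (F1 F2 : R -> R -> R) K := forall x y x' y',
  Rabs (F1 x y - F1 x' y') + Rabs (F2 x y - F2 x' y') <= K * (Rabs (x - x') + Rabs (y - y')).

Lemma LipP_1 F1 F2 K : LipP F1 F2 K -> forall x y x' y',
  Rabs (F1 x y - F1 x' y') <= K * (Rabs (x - x') + Rabs (y - y')).
Proof. intros H x y x' y'. specialize (H x y x' y'). pose proof (Rabs_pos (F2 x y - F2 x' y')). lra. Qed.
Lemma LipP_2 F1 F2 K : LipP F1 F2 K -> forall x y x' y',
  Rabs (F2 x y - F2 x' y') <= K * (Rabs (x - x') + Rabs (y - y')).
Proof. intros H x y x' y'. specialize (H x y x' y'). pose proof (Rabs_pos (F1 x y - F1 x' y')). lra. Qed.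

Fixpoint pic (F1 F2 : R -> R -> R) (t1 x0 y0 : R) (n : nat) : (R -> R) * (R -> R) :=
  match n with
  | O => (fun _ => x0, fun _ => y0)
  | S n => let p := pic F1 F2 t1 x0 y0 n in
     (fun t => x0 + RInt (fun s => F1 (fst p s) (snd p s)) t1 t,
      fun t => y0 + RInt (fun s => F2 (fst p s) (snd p s)) t1 t)
  end.

Lemma pic_cont F1 F2 K t1 x0 y0 : LipP F1 F2 K -> forall n t,
  continuous (fst (pic F1 F2 t1 x0 y0 n)) t /\ continuous (snd (pic F1 F2 t1 x0 y0 n)) t.
Proof.
  intros HL n. induction n; intros t.
  - simpl. split; apply continuous_const.
  - simpl. assert (Hg1 : forall s, continuous (fun s => F1 (fst (pic F1 F2 t1 x0 y0 n) s) (snd (pic F1 F2 t1 x0 y0 n) s)) s).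
    { intros s. apply lip_cont with K. apply (LipP_1 F1 F2 K HL). apply IHn. apply IHn. }
    assert (Hg2 : forall s, continuous (fun s => F2 (fst (pic F1 F2 t1 x0 y0 n) s) (snd (pic F1 F2 t1 x0 y0 n) s)) s).
    { intros s. apply lip_cont with K. apply (LipP_2 F1 F2 K HL). apply IHn. apply IHn. }
    split; apply cont_int_plus; auto.
Qed.

Lemma pic_S1 F1 F2 t1 x0 y0 n t : fst (pic F1 F2 t1 x0 y0 (S n)) t =
  x0 + RInt (fun s => F1 (fst (pic F1 F2 t1 x0 y0 n) s) (snd (pic F1 F2 t1 x0 y0 n) s)) t1 t.
Proof. reflexivity. Qed.
Lemma pic_S2 F1 F2 t1 x0 y0 n t : snd (pic F1 F2 t1 x0 y0 (S n)) t =
  y0 + RInt (fun s => F2 (fst (pic F1 F2 t1 x0 y0 n) s) (snd (pic F1 F2 t1 x0 y0 n) s)) t1 t.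
Proof. reflexivity. Qed.

Lemma ex_lip (G : R -> R -> R) K (u v : R -> R) a b :
  (forall x y x' y', Rabs (G x y - G x' y') <= K * (Rabs (x - x') + Rabs (y - y'))) ->
  (forall s, Rmin a b <= s <= Rmax a b -> continuous u s /\ continuous v s) -> ex_RInt (fun s => G (u s) (v s)) a b.
Proof.
  intros HG Huv. apply (ex_RInt_continuous (V := R_CompleteNormedModule)).
  intros z Hz. apply lip_cont with K; auto; apply Huv; auto.
Qed.

Lemma step_gen F1 F2 K (p1 p2 q1 q2 : R -> R) t1 t B : 0 < K -> LipP F1 F2 K ->
  (forall s, Rmin t1 t <= s <= Rmax t1 t -> continuous p1 s /\ continuous p2 s) ->
  (forall s, Rmin t1 t <= s <= Rmax t1 t -> continuous q1 s /\ continuous q2 s) ->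
  (forall s, Rmin t1 t <= s <= Rmax t1 t -> Rabs (q1 s - p1 s) + Rabs (q2 s - p2 s) <= B) ->
  Rabs (RInt (fun s => F1 (q1 s) (q2 s)) t1 t - RInt (fun s => F1 (p1 s) (p2 s)) t1 t) +
  Rabs (RInt (fun s => F2 (q1 s) (q2 s)) t1 t - RInt (fun s => F2 (p1 s) (p2 s)) t1 t)
  <= 2 * Rabs (t - t1) * (K * B).
Proof.
  intros HK HL Cp Cq Hb.
  assert (E1 := ex_lip F1 K q1 q2 t1 t (LipP_1 F1 F2 K HL) Cq).
  assert (E2 := ex_lip F1 K p1 p2 t1 t (LipP_1 F1 F2 K HL) Cp).
  assert (E3 := ex_lip F2 K q1 q2 t1 t (LipP_2 F1 F2 K HL) Cq).
  assert (E4 := ex_lip F2 K p1 p2 t1 t (LipP_2 F1 F2 K HL) Cp).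
  pose proof (RInt_minus (V := R_CompleteNormedModule) _ _ _ _ E1 E2) as M1.
  pose proof (RInt_minus (V := R_CompleteNormedModule) _ _ _ _ E3 E4) as M2.
  change (RInt (fun x => F1 (q1 x) (q2 x) - F1 (p1 x) (p2 x)) t1 t =
     RInt (fun s => F1 (q1 s) (q2 s)) t1 t - RInt (fun s => F1 (p1 s) (p2 s)) t1 t) in M1.
  change (RInt (fun x => F2 (q1 x) (q2 x) - F2 (p1 x) (p2 x)) t1 t =
     RInt (fun s => F2 (q1 s) (q2 s)) t1 t - RInt (fun s => F2 (p1 s) (p2 s)) t1 t) in M2.
  rewrite <- M1, <- M2.
  assert (0 <= K * B).
  { apply Rmult_le_pos; [lra|]. specialize (Hb t1).
    assert (Rmin t1 t <= t1 <= Rmax t1 t) by (split; [apply Rmin_l|apply Rmax_l]).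
    specialize (Hb H). pose proof (Rabs_pos (q1 t1 - p1 t1)). pose proof (Rabs_pos (q2 t1 - p2 t1)). lra. }
  replace (2 * Rabs (t - t1) * (K * B)) with (Rabs (t - t1) * (K * B) + Rabs (t - t1) * (K * B)) by ring.
  apply Rplus_le_compat; apply RInt_bound.
  - apply (ex_RInt_minus (V := R_CompleteNormedModule)); auto.
  - intros s Hs. eapply Rle_trans. apply (LipP_1 F1 F2 K HL). apply Rmult_le_compat_l; [lra|]. apply Hb; auto.
  - apply (ex_RInt_minus (V := R_CompleteNormedModule)); auto.
  - intros s Hs. eapply Rle_trans. apply (LipP_2 F1 F2 K HL). apply Rmult_le_compat_l; [lra|]. apply Hb; auto.
Qed.

Lemma pic_step F1 F2 K t1 x0 y0 : 0 < K -> LipP F1 F2 K -> forall n t,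
  Rabs (t - t1) <= / (4 * K) ->
  Rabs (fst (pic F1 F2 t1 x0 y0 (S n)) t - fst (pic F1 F2 t1 x0 y0 n) t) +
  Rabs (snd (pic F1 F2 t1 x0 y0 (S n)) t - snd (pic F1 F2 t1 x0 y0 n) t)
  <= / (4 * K) * (Rabs (F1 x0 y0) + Rabs (F2 x0 y0)) / 2 ^ n.
Proof.
  intros HK HL n. induction n; intros t Ht.
  - simpl. rewrite !RInt_const. unfold scal; simpl; unfold mult; simpl.
    replace (x0 + (t - t1) * F1 x0 y0 - x0) with ((t - t1) * F1 x0 y0) by ring.
    replace (y0 + (t - t1) * F2 x0 y0 - y0) with ((t - t1) * F2 x0 y0) by ring.
    rewrite !Rabs_mult. pose proof (Rabs_pos (F1 x0 y0)). pose proof (Rabs_pos (F2 x0 y0)).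
    rewrite Rdiv_1_r. rewrite <- Rmult_plus_distr_l. apply Rmult_le_compat_r; lra.
  - rewrite (pic_S1 F1 F2 t1 x0 y0 (S n) t), (pic_S2 F1 F2 t1 x0 y0 (S n) t).
    rewrite (pic_S1 F1 F2 t1 x0 y0 n t), (pic_S2 F1 F2 t1 x0 y0 n t).
    set (A := / (4 * K) * (Rabs (F1 x0 y0) + Rabs (F2 x0 y0))) in *.
    replace (x0 + RInt (fun s => F1 (fst (pic F1 F2 t1 x0 y0 (S n)) s) (snd (pic F1 F2 t1 x0 y0 (S n)) s)) t1 t -
      (x0 + RInt (fun s => F1 (fst (pic F1 F2 t1 x0 y0 n) s) (snd (pic F1 F2 t1 x0 y0 n) s)) t1 t)) with
      (RInt (fun s => F1 (fst (pic F1 F2 t1 x0 y0 (S n)) s) (snd (pic F1 F2 t1 x0 y0 (S n)) s)) t1 t -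
      RInt (fun s => F1 (fst (pic F1 F2 t1 x0 y0 n) s) (snd (pic F1 F2 t1 x0 y0 n) s)) t1 t) by ring.
    replace (y0 + RInt (fun s => F2 (fst (pic F1 F2 t1 x0 y0 (S n)) s) (snd (pic F1 F2 t1 x0 y0 (S n)) s)) t1 t -
      (y0 + RInt (fun s => F2 (fst (pic F1 F2 t1 x0 y0 n) s) (snd (pic F1 F2 t1 x0 y0 n) s)) t1 t)) with
      (RInt (fun s => F2 (fst (pic F1 F2 t1 x0 y0 (S n)) s) (snd (pic F1 F2 t1 x0 y0 (S n)) s)) t1 t -
      RInt (fun s => F2 (fst (pic F1 F2 t1 x0 y0 n) s) (snd (pic F1 F2 t1 x0 y0 n) s)) t1 t) by ring.
    eapply Rle_trans. apply step_gen with (K := K) (B := A / 2 ^ n); auto.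
    + intros; apply pic_cont with K; auto.
    + intros; apply pic_cont with K; auto.
    + intros s Hs. apply IHn. unfold Rmin, Rmax in Hs. destruct (Rle_dec t1 t);
      revert Ht; unfold Rabs; repeat destruct Rcase_abs; intros; lra.
    + assert (HA : 0 <= A). { unfold A. apply Rmult_le_pos. left; apply Rinv_0_lt_compat; lra.
        pose proof (Rabs_pos (F1 x0 y0)). pose proof (Rabs_pos (F2 x0 y0)). lra. }
      pose proof (pow2_pos n).
      assert (0 <= A / 2 ^ n). { apply Rdiv_le_0_compat; lra. }
      replace (A / 2 ^ S n) with (2 * / (4 * K) * (K * (A / 2 ^ n))).
      2:{ simpl. field. split; lra. }
      assert (0 <= K * (A / 2 ^ n)) by (apply Rmult_le_pos; lra).
      pose proof (Rabs_pos (t - t1)). nra.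
Qed.


Definition PA (F1 F2 : R -> R -> R) K x0 y0 := / (4 * K) * (Rabs (F1 x0 y0) + Rabs (F2 x0 y0)).

Lemma PA_pos F1 F2 K x0 y0 : 0 < K -> 0 <= PA F1 F2 K x0 y0.
Proof. intros. unfold PA. apply Rmult_le_pos. left; apply Rinv_0_lt_compat; lra.
  pose proof (Rabs_pos (F1 x0 y0)). pose proof (Rabs_pos (F2 x0 y0)). lra. Qed.

Lemma pic_cauchy F1 F2 K t1 x0 y0 : 0 < K -> LipP F1 F2 K -> forall n p t,
  Rabs (t - t1) <= / (4 * K) ->
  Rabs (fst (pic F1 F2 t1 x0 y0 (n + p)) t - fst (pic F1 F2 t1 x0 y0 n) t) +
  Rabs (snd (pic F1 F2 t1 x0 y0 (n + p)) t - snd (pic F1 F2 t1 x0 y0 n) t)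
  <= 2 * PA F1 F2 K x0 y0 / 2 ^ n - 2 * PA F1 F2 K x0 y0 / 2 ^ (n + p).
Proof.
  intros HK HL n p t Ht. induction p.
  - rewrite Nat.add_0_r. unfold Rminus. rewrite !Rplus_opp_r, Rabs_R0. lra.
  - rewrite Nat.add_succ_r.
    pose proof (pic_step F1 F2 K t1 x0 y0 HK HL (n + p) t Ht) as HS. fold (PA F1 F2 K x0 y0) in HS.
    pose proof (abs_sub_tri (fst (pic F1 F2 t1 x0 y0 (S (n + p))) t) (fst (pic F1 F2 t1 x0 y0 (n + p)) t) (fst (pic F1 F2 t1 x0 y0 n) t)).
    pose proof (abs_sub_tri (snd (pic F1 F2 t1 x0 y0 (S (n + p))) t) (snd (pic F1 F2 t1 x0 y0 (n + p)) t) (snd (pic F1 F2 t1 x0 y0 n) t)).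
    replace (2 * PA F1 F2 K x0 y0 / 2 ^ S (n + p)) with (PA F1 F2 K x0 y0 / 2 ^ (n + p)).
    2:{ simpl. field. pose proof (pow2_pos (n + p)). lra. }
    unfold Rdiv in *. lra.
Qed.

Definition UU (F1 F2 : R -> R -> R) t1 x0 y0 t := real (Lim_seq (fun n => fst (pic F1 F2 t1 x0 y0 n) t)).
Definition VV (F1 F2 : R -> R -> R) t1 x0 y0 t := real (Lim_seq (fun n => snd (pic F1 F2 t1 x0 y0 n) t)).

Lemma cauchy_gen (u : nat -> R) C : 0 <= C ->
  (forall n p, Rabs (u (n + p)%nat - u n) <= C / 2 ^ n) -> is_lim_seq u (real (Lim_seq u)).
Proof.
  intros HC H. apply Lim_seq_correct'. apply ex_lim_seq_cauchy_corr.
  intros eps. destruct (small_pow2 (2 * C) eps (cond_pos eps)) as [N HN].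
  exists N. intros n m Hn Hm.
  pose proof (H N (n - N)%nat). pose proof (H N (m - N)%nat).
  replace (N + (n - N))%nat with n in H0 by lia. replace (N + (m - N))%nat with m in H1 by lia.
  pose proof (abs_sub_tri (u n) (u N) (u m)). rewrite (Rabs_minus_sym (u N) (u m)) in H2.
  unfold Rdiv in *. lra.
Qed.

Lemma pic_lim F1 F2 K t1 x0 y0 : 0 < K -> LipP F1 F2 K -> forall t,
  Rabs (t - t1) <= / (4 * K) ->
  is_lim_seq (fun n => fst (pic F1 F2 t1 x0 y0 n) t) (UU F1 F2 t1 x0 y0 t) /\
  is_lim_seq (fun n => snd (pic F1 F2 t1 x0 y0 n) t) (VV F1 F2 t1 x0 y0 t).
Proof.
  intros HK HL t Ht. pose proof (PA_pos F1 F2 K x0 y0 HK).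
  split; apply cauchy_gen with (C := 2 * PA F1 F2 K x0 y0); try lra;
  intros n p; pose proof (pic_cauchy F1 F2 K t1 x0 y0 HK HL n p t Ht);
  pose proof (pow2_pos (n + p)); assert (0 <= 2 * PA F1 F2 K x0 y0 / 2 ^ (n + p)) by (apply Rdiv_le_0_compat; lra).
  pose proof (Rabs_pos (snd (pic F1 F2 t1 x0 y0 (n + p)) t - snd (pic F1 F2 t1 x0 y0 n) t)); lra.
  pose proof (Rabs_pos (fst (pic F1 F2 t1 x0 y0 (n + p)) t - fst (pic F1 F2 t1 x0 y0 n) t)); lra.
Qed.

Lemma pic_err F1 F2 K t1 x0 y0 : 0 < K -> LipP F1 F2 K -> forall n t,
  Rabs (t - t1) <= / (4 * K) ->
  Rabs (UU F1 F2 t1 x0 y0 t - fst (pic F1 F2 t1 x0 y0 n) t) +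
  Rabs (VV F1 F2 t1 x0 y0 t - snd (pic F1 F2 t1 x0 y0 n) t) <= 2 * PA F1 F2 K x0 y0 / 2 ^ n.
Proof.
  intros HK HL n t Ht. destruct (pic_lim F1 F2 K t1 x0 y0 HK HL t Ht) as [L1 L2].
  apply is_lim_seq_Reals in L1. apply is_lim_seq_Reals in L2.
  apply Rle_plus_epsilon. intros eps He.
  destruct (L1 (eps / 2)) as [N1 HN1]; [lra|]. destruct (L2 (eps / 2)) as [N2 HN2]; [lra|].
  set (m := (N1 + N2)%nat).
  specialize (HN1 (n + m)%nat ltac:(unfold m; lia)). specialize (HN2 (n + m)%nat ltac:(unfold m; lia)).
  unfold Rdist in HN1, HN2.
  pose proof (pic_cauchy F1 F2 K t1 x0 y0 HK HL n m t Ht).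
  pose proof (pow2_pos (n + m)). assert (0 <= 2 * PA F1 F2 K x0 y0 / 2 ^ (n + m)) by (apply Rdiv_le_0_compat; [pose proof (PA_pos F1 F2 K x0 y0 HK)|]; lra).
  pose proof (abs_sub_tri (UU F1 F2 t1 x0 y0 t) (fst (pic F1 F2 t1 x0 y0 (n + m)) t) (fst (pic F1 F2 t1 x0 y0 n) t)).
  pose proof (abs_sub_tri (VV F1 F2 t1 x0 y0 t) (snd (pic F1 F2 t1 x0 y0 (n + m)) t) (snd (pic F1 F2 t1 x0 y0 n) t)).
  rewrite Rabs_minus_sym in HN1, HN2. lra.
Qed.


Lemma U_cont F1 F2 K t1 x0 y0 : 0 < K -> LipP F1 F2 K -> forall t,
  Rabs (t - t1) < / (4 * K) ->
  continuous (UU F1 F2 t1 x0 y0) t /\ continuous (VV F1 F2 t1 x0 y0) t.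
Proof.
  intros HK HL t Ht.
  assert (Main : forall eps, 0 < eps -> exists d, 0 < d /\ forall y, Rabs (y - t) < d ->
     Rabs (UU F1 F2 t1 x0 y0 y - UU F1 F2 t1 x0 y0 t) < eps /\
     Rabs (VV F1 F2 t1 x0 y0 y - VV F1 F2 t1 x0 y0 t) < eps).
  { intros eps He.
    destruct (small_pow2 (2 * PA F1 F2 K x0 y0) (eps / 3)) as [n Hn]; [lra|].
    destruct (pic_cont F1 F2 K t1 x0 y0 HL n t) as [C1 C2].
    destruct (proj1 (cont_eps _ t) C1 (eps / 3)) as [d1 [Hd1 H1]]; [lra|].
    destruct (proj1 (cont_eps _ t) C2 (eps / 3)) as [d2 [Hd2 H2]]; [lra|].
    exists (Rmin (Rmin d1 d2) (/ (4 * K) - Rabs (t - t1))). split.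
    { repeat apply Rmin_pos; lra. }
    intros y Hy.
    assert (Hy1 : Rabs (y - t) < d1) by (eapply Rlt_le_trans; [apply Hy|]; eapply Rle_trans; apply Rmin_l).
    assert (Hy2 : Rabs (y - t) < d2) by (eapply Rlt_le_trans; [apply Hy|]; eapply Rle_trans; [apply Rmin_l|apply Rmin_r]).
    assert (Hy3 : Rabs (y - t) < / (4 * K) - Rabs (t - t1)) by (eapply Rlt_le_trans; [apply Hy|]; apply Rmin_r).
    assert (Hyt : Rabs (y - t1) <= / (4 * K)).
    { pose proof (abs_sub_tri y t t1). lra. }
    pose proof (pic_err F1 F2 K t1 x0 y0 HK HL n y Hyt) as E1.
    pose proof (pic_err F1 F2 K t1 x0 y0 HK HL n t (Rlt_le _ _ Ht)) as E2.
    specialize (H1 y Hy1). specialize (H2 y Hy2).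
    pose proof (abs_sub_tri (UU F1 F2 t1 x0 y0 y) (fst (pic F1 F2 t1 x0 y0 n) y) (UU F1 F2 t1 x0 y0 t)) as T1.
    pose proof (abs_sub_tri (fst (pic F1 F2 t1 x0 y0 n) y) (fst (pic F1 F2 t1 x0 y0 n) t) (UU F1 F2 t1 x0 y0 t)) as T2.
    pose proof (abs_sub_tri (VV F1 F2 t1 x0 y0 y) (snd (pic F1 F2 t1 x0 y0 n) y) (VV F1 F2 t1 x0 y0 t)) as T3.
    pose proof (abs_sub_tri (snd (pic F1 F2 t1 x0 y0 n) y) (snd (pic F1 F2 t1 x0 y0 n) t) (VV F1 F2 t1 x0 y0 t)) as T4.
    rewrite (Rabs_minus_sym (fst (pic F1 F2 t1 x0 y0 n) t)) in T2.
    rewrite (Rabs_minus_sym (snd (pic F1 F2 t1 x0 y0 n) t)) in T4.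
    pose proof (Rabs_pos (UU F1 F2 t1 x0 y0 y - fst (pic F1 F2 t1 x0 y0 n) y)).
    pose proof (Rabs_pos (VV F1 F2 t1 x0 y0 y - snd (pic F1 F2 t1 x0 y0 n) y)).
    pose proof (Rabs_pos (UU F1 F2 t1 x0 y0 t - fst (pic F1 F2 t1 x0 y0 n) t)).
    pose proof (Rabs_pos (VV F1 F2 t1 x0 y0 t - snd (pic F1 F2 t1 x0 y0 n) t)).
    split; lra. }
  split; apply cont_eps; intros eps He; destruct (Main eps He) as [d [Hd Hd']];
    exists d; split; auto; intros y Hy; apply Hd'; auto.
Qed.

Lemma U_int F1 F2 K t1 x0 y0 : 0 < K -> LipP F1 F2 K -> forall t,
  Rabs (t - t1) < / (4 * K) ->
  UU F1 F2 t1 x0 y0 t = x0 + RInt (fun s => F1 (UU F1 F2 t1 x0 y0 s) (VV F1 F2 t1 x0 y0 s)) t1 t /\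
  VV F1 F2 t1 x0 y0 t = y0 + RInt (fun s => F2 (UU F1 F2 t1 x0 y0 s) (VV F1 F2 t1 x0 y0 s)) t1 t.
Proof.
  intros HK HL t Ht.
  set (U := UU F1 F2 t1 x0 y0). set (V := VV F1 F2 t1 x0 y0). set (A := PA F1 F2 K x0 y0).
  assert (Main : forall n, Rabs (U t - (x0 + RInt (fun s => F1 (U s) (V s)) t1 t)) +
                        Rabs (V t - (y0 + RInt (fun s => F2 (U s) (V s)) t1 t)) <= 2 * A / 2 ^ n).
  { intros n.
    pose proof (pic_err F1 F2 K t1 x0 y0 HK HL (S n) t (Rlt_le _ _ Ht)) as E.
    rewrite pic_S1, pic_S2 in E. fold U V A in E.
    assert (SG := step_gen F1 F2 K (fst (pic F1 F2 t1 x0 y0 n)) (snd (pic F1 F2 t1 x0 y0 n)) U V t1 t (2 * A / 2 ^ n) HK HL).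
    assert (SG' : Rabs (RInt (fun s => F1 (U s) (V s)) t1 t - RInt (fun s => F1 (fst (pic F1 F2 t1 x0 y0 n) s) (snd (pic F1 F2 t1 x0 y0 n) s)) t1 t) +
      Rabs (RInt (fun s => F2 (U s) (V s)) t1 t - RInt (fun s => F2 (fst (pic F1 F2 t1 x0 y0 n) s) (snd (pic F1 F2 t1 x0 y0 n) s)) t1 t)
      <= 2 * Rabs (t - t1) * (K * (2 * A / 2 ^ n))).
    { apply SG.
      - intros; apply pic_cont with K; auto.
      - intros s Hs. apply U_cont with K; auto. pose proof (between_abs t1 t s Hs). lra.
      - intros s Hs. apply pic_err; auto. pose proof (between_abs t1 t s Hs). lra. }
    clear SG.
    pose proof (pow2_pos n). pose proof (PA_pos F1 F2 K x0 y0 HK). fold A in H0.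
    assert (2 * Rabs (t - t1) * (K * (2 * A / 2 ^ n)) <= A / 2 ^ n).
    { replace (A / 2 ^ n) with (2 * / (4 * K) * (K * (2 * A / 2 ^ n))) by (field; lra).
      apply Rmult_le_compat_r. apply Rmult_le_pos; [lra|]. apply Rdiv_le_0_compat; lra. lra. }
    replace (2 * A / 2 ^ S n) with (A / 2 ^ n) in E by (simpl; field; lra).
    pose proof (abs_sub_tri (U t) (x0 + RInt (fun s => F1 (fst (pic F1 F2 t1 x0 y0 n) s) (snd (pic F1 F2 t1 x0 y0 n) s)) t1 t) (x0 + RInt (fun s => F1 (U s) (V s)) t1 t)) as T1.
    pose proof (abs_sub_tri (V t) (y0 + RInt (fun s => F2 (fst (pic F1 F2 t1 x0 y0 n) s) (snd (pic F1 F2 t1 x0 y0 n) s)) t1 t) (y0 + RInt (fun s => F2 (U s) (V s)) t1 t)) as T2.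
    rewrite (Rabs_minus_sym (RInt (fun s => F1 (U s) (V s)) t1 t)) in SG'.
    match type of SG' with Rabs ?a + _ <= _ => replace a with (x0 + RInt (fun s => F1 (fst (pic F1 F2 t1 x0 y0 n) s) (snd (pic F1 F2 t1 x0 y0 n) s)) t1 t - (x0 + RInt (fun s => F1 (U s) (V s)) t1 t)) in SG' by ring end.
    rewrite (Rabs_minus_sym (RInt (fun s => F2 (U s) (V s)) t1 t)) in SG'.
    match type of SG' with _ + Rabs ?a <= _ => replace a with (y0 + RInt (fun s => F2 (fst (pic F1 F2 t1 x0 y0 n) s) (snd (pic F1 F2 t1 x0 y0 n) s)) t1 t - (y0 + RInt (fun s => F2 (U s) (V s)) t1 t)) in SG' by ring end.
    unfold Rdiv in *. lra. }
  split; apply Rminus_diag_uniq; apply zero_pow2 with (C := 2 * A); intros n; specialize (Main n);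
  pose proof (Rabs_pos (U t - (x0 + RInt (fun s => F1 (U s) (V s)) t1 t)));
  pose proof (Rabs_pos (V t - (y0 + RInt (fun s => F2 (U s) (V s)) t1 t))); lra.
Qed.

Lemma picard_exist F1 F2 K t1 x0 y0 : 0 < K -> LipP F1 F2 K ->
  exists u v : R -> R, u t1 = x0 /\ v t1 = y0 /\
   forall t, Rabs (t - t1) < / (4 * K) ->
     is_derive u t (F1 (u t) (v t)) /\ is_derive v t (F2 (u t) (v t)).
Proof.
  intros HK HL. exists (UU F1 F2 t1 x0 y0), (VV F1 F2 t1 x0 y0).
  assert (Hh : 0 < / (4 * K)) by (apply Rinv_0_lt_compat; lra).
  assert (H0 : Rabs (t1 - t1) < / (4 * K)) by (unfold Rminus; rewrite Rplus_opp_r, Rabs_R0; lra).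
  destruct (U_int F1 F2 K t1 x0 y0 HK HL t1 H0) as [I1 I2].
  rewrite RInt_point in I1, I2. change (@zero R_CompleteNormedModule) with 0 in I1, I2.
  split. rewrite I1; ring. split. rewrite I2; ring.
  intros t Ht.
  assert (Cg : forall (G : R -> R -> R), (forall x y x' y', Rabs (G x y - G x' y') <= K * (Rabs (x - x') + Rabs (y - y'))) ->
      forall s, Rabs (s - t1) < / (4 * K) -> continuous (fun s => G (UU F1 F2 t1 x0 y0 s) (VV F1 F2 t1 x0 y0 s)) s).
  { intros G HG s Hs. apply lip_cont with K; auto; apply U_cont with K; auto. }
  assert (Loc : locally t (fun s => Rabs (s - t1) < / (4 * K))).
  { assert (Hp : 0 < / (4 * K) - Rabs (t - t1)) by lra. exists (mkposreal _ Hp).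
    intros y Hy. change (Rabs (y - t) < / (4 * K) - Rabs (t - t1)) in Hy.
    pose proof (abs_sub_tri y t t1). simpl in *. lra. }
  split.
  - apply (is_derive_ext_loc (fun t => x0 + RInt (fun s => F1 (UU F1 F2 t1 x0 y0 s) (VV F1 F2 t1 x0 y0 s)) t1 t) (UU F1 F2 t1 x0 y0) t).
    + eapply filter_imp; [|exact Loc]. intros s Hs. symmetry. apply (U_int F1 F2 K t1 x0 y0 HK HL s Hs).
    + apply (der_int_plus_loc (fun s => F1 (UU F1 F2 t1 x0 y0 s) (VV F1 F2 t1 x0 y0 s)) x0 t1 (/ (4 * K)) t); auto. apply Cg. apply (LipP_1 F1 F2 K HL).
  - apply (is_derive_ext_loc (fun t => y0 + RInt (fun s => F2 (UU F1 F2 t1 x0 y0 s) (VV F1 F2 t1 x0 y0 s)) t1 t) (VV F1 F2 t1 x0 y0) t).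
    + eapply filter_imp; [|exact Loc]. intros s Hs. symmetry. apply (U_int F1 F2 K t1 x0 y0 HK HL s Hs).
    + apply (der_int_plus_loc (fun s => F2 (UU F1 F2 t1 x0 y0 s) (VV F1 F2 t1 x0 y0 s)) y0 t1 (/ (4 * K)) t); auto. apply Cg. apply (LipP_2 F1 F2 K HL).
Qed.


Lemma der_cpt (f : R -> R) x l : is_derive f x l -> continuity_pt f x.
Proof. intros H. apply derivable_continuous_pt. exists l. apply is_derive_Reals; auto. Qed.

Lemma der_cont (f : R -> R) x l : is_derive f x l -> continuous f x.
Proof. intros H. apply continuity_pt_filterlim. eapply der_cpt; eauto. Qed.

Lemma cpt_dist (u u' : R -> R) x : continuity_pt u x -> continuity_pt u' x ->
  continuity_pt (fun s => Rabs (u s - u' s)) x.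
Proof.
  intros H1 H2. apply (continuity_pt_comp (fun s => u s - u' s) Rabs).
  apply continuity_pt_minus; auto. apply Rcontinuity_abs.
Qed.

Lemma ftc_gen (f g : R -> R) a t :
  (forall s, Rmin a t <= s <= Rmax a t -> is_derive f s (g s) /\ continuous g s) ->
  RInt g a t = f t - f a.
Proof.
  intros H. apply is_RInt_unique. apply (is_RInt_derive f g).
  intros x Hx; apply H; auto. intros x Hx; apply H; auto.
Qed.

Lemma picard_uniq F1 F2 K (u v u' v' : R -> R) a b : 0 < K -> LipP F1 F2 K -> a <= b -> b - a <= / (4 * K) ->
  (forall t, a <= t <= b -> is_derive u t (F1 (u t) (v t)) /\ is_derive v t (F2 (u t) (v t)) /\
      is_derive u' t (F1 (u' t) (v' t)) /\ is_derive v' t (F2 (u' t) (v' t))) ->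
  u a = u' a -> v a = v' a -> forall t, a <= t <= b -> u t = u' t /\ v t = v' t.
Proof.
  intros HK HL Hab Hh HD Ha1 Ha2.
  set (d := fun s => Rabs (u s - u' s) + Rabs (v s - v' s)).
  destruct (continuity_ab_maj d a b Hab) as [M [HM HMab]].
  { intros c Hc. destruct (HD c Hc) as [D1 [D2 [D3 D4]]]. unfold d.
    apply (continuity_pt_plus (fun s => Rabs (u s - u' s)) (fun s => Rabs (v s - v' s)));
    apply cpt_dist; eapply der_cpt; eauto. }
  set (D := d M).
  assert (Main : forall n t, a <= t <= b -> d t <= D / 2 ^ n).
  { induction n; intros t Ht.
    - simpl. rewrite Rdiv_1_r. apply HM; auto.
    - assert (Hsub : forall s, Rmin a t <= s <= Rmax a t -> a <= s <= b).
      { intros s Hs. rewrite Rmin_left, Rmax_right in Hs; lra. }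
      assert (E1 : u t - u' t = RInt (fun s => F1 (u s) (v s)) a t - RInt (fun s => F1 (u' s) (v' s)) a t).
      { rewrite (ftc_gen u (fun s => F1 (u s) (v s)) a t), (ftc_gen u' (fun s => F1 (u' s) (v' s)) a t). rewrite Ha1; ring.
        all: intros s Hs; destruct (HD s (Hsub s Hs)) as [D1 [D2 [D3 D4]]]; split; auto;
        apply lip_cont with K; try apply (LipP_1 F1 F2 K HL); eapply der_cont; eauto. }
      assert (E2 : v t - v' t = RInt (fun s => F2 (u s) (v s)) a t - RInt (fun s => F2 (u' s) (v' s)) a t).
      { rewrite (ftc_gen v (fun s => F2 (u s) (v s)) a t), (ftc_gen v' (fun s => F2 (u' s) (v' s)) a t). rewrite Ha2; ring.
        all: intros s Hs; destruct (HD s (Hsub s Hs)) as [D1 [D2 [D3 D4]]]; split; auto;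
        apply lip_cont with K; try apply (LipP_2 F1 F2 K HL); eapply der_cont; eauto. }
      unfold d. rewrite E1, E2.
      eapply Rle_trans. apply step_gen with (K := K) (B := D / 2 ^ n); auto.
      + intros s Hs; destruct (HD s (Hsub s Hs)) as [_ [_ [D3 D4]]]; split; eapply der_cont; eauto.
      + intros s Hs; destruct (HD s (Hsub s Hs)) as [D1 [D2 _]]; split; eapply der_cont; eauto.
      + intros s Hs. apply IHn. apply Hsub; auto.
      + pose proof (pow2_pos n). assert (0 <= D) by (unfold D, d; pose proof (Rabs_pos (u M - u' M)); pose proof (Rabs_pos (v M - v' M)); lra).
        assert (0 <= D / 2 ^ n) by (apply Rdiv_le_0_compat; lra).
        replace (D / 2 ^ S n) with (2 * / (4 * K) * (K * (D / 2 ^ n))) by (simpl; field; lra).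
        rewrite Rabs_right by lra. apply Rmult_le_compat_r. apply Rmult_le_pos; lra. lra. }
  intros t Ht. assert (Z : d t = 0).
  { apply Rle_antisym. apply Rle_plus_epsilon. intros e He. rewrite Rplus_0_l.
    destruct (small_pow2 D e He) as [n Hn]. specialize (Main n t Ht). lra.
    unfold d. pose proof (Rabs_pos (u t - u' t)); pose proof (Rabs_pos (v t - v' t)); lra. }
  unfold d in Z. pose proof (Rabs_pos (u t - u' t)); pose proof (Rabs_pos (v t - v' t)).
  split; apply Rminus_diag_uniq; apply Rabs_eq_0; lra.
Qed.


Definition cl lo hi x := Rmax lo (Rmin x hi).
Definition Dl (delta : R -> R) lo x := RInt delta lo x.

Lemma cl_lip lo hi x x' : Rabs (cl lo hi x - cl lo hi x') <= Rabs (x - x').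
Proof. unfold cl, Rmax, Rmin. repeat destruct Rle_dec; unfold Rabs; repeat destruct Rcase_abs; lra. Qed.

Lemma cl_range lo hi x : lo <= hi -> lo <= cl lo hi x <= hi.
Proof. intros. unfold cl, Rmax, Rmin. repeat destruct Rle_dec; lra. Qed.

Lemma cl_id lo hi x : lo <= x <= hi -> cl lo hi x = x.
Proof. intros. unfold cl, Rmax, Rmin. repeat destruct Rle_dec; lra. Qed.

Lemma delta_cont (delta : R -> R) : admissible_delta delta -> forall x, 0 < x -> continuous delta x.
Proof. intros [_ [_ H]] x Hx. apply (ex_derive_continuous (K := R_AbsRing) (V := R_NormedModule)). apply H; auto. Qed.

Lemma Dl_der delta lo x : admissible_delta delta -> 0 < lo -> 0 < x -> is_derive (Dl delta lo) x (delta x).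
Proof.
  intros Ha Hlo Hx. unfold Dl.
  apply (is_derive_RInt delta (fun x => RInt delta lo x) lo x).
  2: apply delta_cont; auto.
  assert (Hp : 0 < x / 2) by lra. exists (mkposreal _ Hp). intros y Hy.
  change (Rabs (y - x) < x / 2) in Hy.
  apply (RInt_correct (V := R_CompleteNormedModule)). apply ex_RInt_continuous.
  intros z Hz. apply delta_cont; auto. unfold Rmin, Rmax in Hz. destruct Rle_dec;
  revert Hy; unfold Rabs; destruct Rcase_abs; intros; lra.
Qed.

Lemma Dl_lip delta lo hi M a b : admissible_delta delta -> 0 < lo ->
  (forall x, 0 < x -> Rabs (delta x) <= M) ->
  lo <= a <= hi -> lo <= b <= hi -> Rabs (Dl delta lo a - Dl delta lo b) <= M * Rabs (a - b).
Proof.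
  intros Ha Hlo HM Hab Hbb.
  destruct (MVT_gen (Dl delta lo) b a delta) as [c [Hc Eq]].
  - intros x Hx. apply Dl_der; auto. unfold Rmin, Rmax in Hx; destruct Rle_dec; lra.
  - intros x Hx. eapply der_cpt. apply Dl_der; auto. unfold Rmin, Rmax in Hx; destruct Rle_dec; lra.
  - rewrite Eq, Rabs_mult. apply Rmult_le_compat_r. apply Rabs_pos. apply HM.
    unfold Rmin, Rmax in Hc; destruct Rle_dec; lra.
Qed.

Lemma inv2_lip lo hi a b : 0 < lo -> lo <= a <= hi -> lo <= b <= hi ->
  Rabs (/ a ^ 2 - / b ^ 2) <= 2 * hi / lo ^ 4 * Rabs (a - b).
Proof.
  intros Hlo Ha Hb.
  replace (/ a ^ 2 - / b ^ 2) with ((b - a) * ((a + b) / (a ^ 2 * b ^ 2))) by (field; lra).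
  rewrite Rabs_mult, Rabs_minus_sym. rewrite Rmult_comm. apply Rmult_le_compat_r. apply Rabs_pos.
  rewrite Rabs_right.
  2:{ apply Rle_ge, Rdiv_le_0_compat. lra. apply Rmult_lt_0_compat; apply pow_lt; lra. }
  assert (0 < a ^ 2 * b ^ 2) by (apply Rmult_lt_0_compat; apply pow_lt; lra).
  assert (lo ^ 4 <= a ^ 2 * b ^ 2).
  { replace (lo ^ 4) with (lo ^ 2 * lo ^ 2) by ring. apply Rmult_le_compat; try (apply pow_le; lra);
    apply pow_incr; lra. }
  assert (0 < lo ^ 4) by (apply pow_lt; lra).
  unfold Rdiv. apply Rle_trans with ((a + b) * / lo ^ 4).
  apply Rmult_le_compat_l. lra. apply Rinv_le_contravar; lra.
  apply Rmult_le_compat_r. left; apply Rinv_0_lt_compat; lra. lra.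
Qed.

Definition FF1 delta lo hi (x y : R) := y - Dl delta lo (cl lo hi x).
Definition FF2 (lo hi x y : R) := - / (cl lo hi x) ^ 2.

Lemma sys_lip delta lo hi M : admissible_delta delta -> 0 < lo -> lo <= hi -> 0 <= M ->
  (forall x, 0 < x -> Rabs (delta x) <= M) ->
  LipP (FF1 delta lo hi) (FF2 lo hi) (1 + M + 2 * hi / lo ^ 4).
Proof.
  intros Ha Hlo Hlh HM0 HM x y x' y'. unfold FF1, FF2.
  pose proof (cl_range lo hi x Hlh). pose proof (cl_range lo hi x' Hlh).
  pose proof (cl_lip lo hi x x').
  pose proof (Dl_lip delta lo hi M (cl lo hi x) (cl lo hi x') Ha Hlo HM H H0).
  pose proof (inv2_lip lo hi (cl lo hi x) (cl lo hi x') Hlo H H0).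
  replace (y - Dl delta lo (cl lo hi x) - (y' - Dl delta lo (cl lo hi x'))) with
    ((y - y') - (Dl delta lo (cl lo hi x) - Dl delta lo (cl lo hi x'))) by ring.
  replace (- / cl lo hi x ^ 2 - - / cl lo hi x' ^ 2) with (- (/ cl lo hi x ^ 2 - / cl lo hi x' ^ 2)) by ring. rewrite Rabs_Ropp.
  pose proof (Rabs_triang (y - y') (- (Dl delta lo (cl lo hi x) - Dl delta lo (cl lo hi x')))).
  rewrite Rabs_Ropp in H4. unfold Rminus at 1 in H4.
  assert (0 <= 2 * hi / lo ^ 4). { apply Rdiv_le_0_compat. lra. apply pow_lt; lra. }
  pose proof (Rabs_pos (x - x')). pose proof (Rabs_pos (y - y')).
  assert (M * Rabs (cl lo hi x - cl lo hi x') <= M * Rabs (x - x')) by (apply Rmult_le_compat_l; lra).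
  assert (2 * hi / lo ^ 4 * Rabs (cl lo hi x - cl lo hi x') <= 2 * hi / lo ^ 4 * Rabs (x - x')) by (apply Rmult_le_compat_l; lra).
  unfold Rminus in *. nra.
Qed.


Lemma ball_loc (P : R -> Prop) t rho : 0 < rho -> (forall x, Rabs (x - t) < rho -> P x) ->
  forall x, Rabs (x - t) < rho -> locally x P.
Proof.
  intros Hr H x Hx. assert (Hp : 0 < rho - Rabs (x - t)) by lra. exists (mkposreal _ Hp).
  intros y Hy. change (Rabs (y - x) < rho - Rabs (x - t)) in Hy. apply H.
  pose proof (abs_sub_tri y x t). lra.
Qed.

Lemma ball_loc0 (P : R -> Prop) t rho : 0 < rho -> (forall x, Rabs (x - t) < rho -> P x) -> locally t P.
Proof. intros Hr H. apply (ball_loc P t rho Hr H). unfold Rminus; rewrite Rplus_opp_r, Rabs_R0; lra. Qed.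

Definition odeP (delta : R -> R) (g : R -> R) t :=
  0 < g t /\ ex_derive g t /\ ex_derive (Derive g) t /\
  Derive (Derive g) t + delta (g t) * Derive g t = - / (g t ^ 2).

Lemma transfer delta (f g : R -> R) t rho : 0 < rho -> (forall x, Rabs (x - t) < rho -> f x = g x) ->
  odeP delta g t -> odeP delta f t.
Proof.
  intros Hr Heq [H1 [H2 [H3 H4]]].
  assert (HD : forall x, Rabs (x - t) < rho -> Derive f x = Derive g x).
  { intros x Hx. apply Derive_ext_loc. apply (ball_loc (fun y => f y = g y) t rho Hr Heq x Hx). }
  assert (Ht : Rabs (t - t) < rho) by (unfold Rminus; rewrite Rplus_opp_r, Rabs_R0; lra).
  assert (L1 : locally t (fun y => g y = f y)).
  { apply (ball_loc0 _ t rho Hr). intros; symmetry; auto. }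
  assert (L2 : locally t (fun y => Derive g y = Derive f y)).
  { apply (ball_loc0 _ t rho Hr). intros; symmetry; auto. }
  unfold odeP. rewrite (Heq t Ht), (HD t Ht). split; auto. split.
  eapply ex_derive_ext_loc; eauto. split. eapply ex_derive_ext_loc; eauto.
  rewrite <- (Derive_ext_loc _ _ _ L2). auto.
Qed.

Lemma loc_cl (f : R -> R) s lo hi : continuous f s -> lo < f s < hi ->
  locally s (fun s' => cl lo hi (f s') = f s').
Proof.
  intros Hc Hs. destruct (proj1 (cont_eps f s) Hc (Rmin (f s - lo) (hi - f s))) as [d [Hd H]].
  { apply Rmin_pos; lra. }
  apply (ball_loc0 _ s d Hd). intros x Hx. specialize (H x Hx).
  pose proof (Rmin_l (f s - lo) (hi - f s)). pose proof (Rmin_r (f s - lo) (hi - f s)).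
  apply cl_id. revert H; unfold Rabs; destruct Rcase_abs; intros; lra.
Qed.

Lemma sys_to_ode delta lo hi (u v : R -> R) t rho : admissible_delta delta -> 0 < lo -> lo <= hi -> 0 < rho ->
  (forall s, Rabs (s - t) < rho -> is_derive u s (FF1 delta lo hi (u s) (v s)) /\
     is_derive v s (FF2 lo hi (u s) (v s)) /\ lo < u s < hi) ->
  odeP delta u t.
Proof.
  intros Ha Hlo Hlh Hr H.
  assert (Ht : Rabs (t - t) < rho) by (unfold Rminus; rewrite Rplus_opp_r, Rabs_R0; lra).
  assert (HD : forall s, Rabs (s - t) < rho -> Derive u s = v s - Dl delta lo (u s)).
  { intros s Hs. destruct (H s Hs) as [D1 [_ Hb]]. rewrite (is_derive_unique _ _ _ D1).
    unfold FF1. rewrite cl_id; auto. lra. }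
  destruct (H t Ht) as [D1 [D2 Hb]].
  assert (Hg : is_derive (fun s => v s - Dl delta lo (u s)) t
     (FF2 lo hi (u t) (v t) - FF1 delta lo hi (u t) (v t) * delta (u t))).
  { apply (is_derive_minus v (fun s => Dl delta lo (u s))). auto.
    replace (FF1 delta lo hi (u t) (v t) * delta (u t)) with (scal (FF1 delta lo hi (u t) (v t)) (delta (u t))) by reflexivity.
    apply (is_derive_comp (Dl delta lo) u). apply Dl_der; auto; lra. auto. }
  assert (L : locally t (fun s => v s - Dl delta lo (u s) = Derive u s)).
  { apply (ball_loc0 _ t rho Hr). intros; symmetry; auto. }
  unfold odeP. split. lra. split. eexists; eauto. split.
  eexists. apply (is_derive_ext_loc _ _ _ _ L Hg).
  rewrite (is_derive_unique _ _ _ (is_derive_ext_loc _ _ _ _ L Hg)).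
  rewrite (is_derive_unique _ _ _ D1). unfold FF1, FF2. rewrite cl_id by lra. field. lra.
Qed.


Lemma energy_der delta alpha omega r (t : R) : is_solution delta alpha (Finite omega) r ->
  Rbar_lt alpha t -> t < omega ->
  is_derive (energy r) t (- delta (r t) * (Derive r t) ^ 2).
Proof.
  intros Hs H1 H2. destruct (Hs t H1 H2) as [P [E1 [E2 Eq]]]. change (real (Finite t)) with t in *.
  unfold energy. auto_derive.
  - split; [exact E2|split; [exact E1|split; [apply Rgt_not_eq; exact P|exact I]]].
  - change (Derive (fun x => Derive r x) t) with (Derive (Derive r) t).
    change (Derive (fun x => r x) t) with (Derive r t).
    assert (E : Derive (Derive r) t = - / (r t ^ 2) - delta (r t) * Derive r t).
    { change (real (Finite t)) with t in Eq. rewrite <- Eq. ring. }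
    rewrite E.
    field. lra.
Qed.

Lemma sol_at delta alpha omega r (t : R) : is_solution delta alpha (Finite omega) r ->
  Rbar_lt alpha t -> t < omega -> odeP delta r t.
Proof.
  intros Hs H1 H2. destruct (Hs t H1 H2) as [P [E1 [E2 Eq]]]. change (real (Finite t)) with t in *.
  repeat split; auto.
Qed.

Lemma Rbar_lt_le_R (a : Rbar) (x y : R) : Rbar_lt a x -> x <= y -> Rbar_lt a y.
Proof. destruct a; simpl; intros; lra || auto. Qed.

Lemma interior_pt (a : Rbar) (w : R) : Rbar_lt a w -> exists T : R, Rbar_lt a T /\ T < w.
Proof.
  destruct a as [a| |]; simpl; intros H.
  - exists ((a + w) / 2). simpl. split; lra.
  - contradiction.
  - exists (w - 1). split; [exact I|lra].
Qed.

Lemma energy_mono delta alpha omega r : admissible_delta delta -> is_solution delta alpha (Finite omega) r ->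
  forall a b : R, Rbar_lt alpha a -> a <= b -> b < omega -> energy r b <= energy r a.
Proof.
  intros Ha Hs a b H1 H2 H3.
  destruct (MVT_gen (energy r) a b (fun t => - delta (r t) * (Derive r t) ^ 2)) as [c [Hc Eq]].
  - intros x Hx. rewrite Rmin_left, Rmax_right in Hx by lra.
    apply (energy_der delta alpha omega r x Hs). apply Rbar_lt_le_R with a; [exact H1|lra]. lra.
  - intros x Hx. rewrite Rmin_left, Rmax_right in Hx by lra.
    eapply der_cpt. apply (energy_der delta alpha omega r x Hs). apply Rbar_lt_le_R with a; [exact H1|lra]. lra.
  - rewrite Rmin_left, Rmax_right in Hc by lra.
    assert (Hc' : Rbar_lt alpha c) by (apply Rbar_lt_le_R with a; [exact H1|lra]).
    destruct (sol_at delta alpha omega r c Hs Hc' ltac:(lra)) as [P _].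
    destruct Ha as [Hd _]. specialize (Hd (r c) P).
    assert (0 <= delta (r c) * Derive r c ^ 2) by (apply Rmult_le_pos; auto; apply pow2_ge_0).
    assert (0 <= b - a) by lra.
    assert (0 <= delta (r c) * Derive r c ^ 2 * (b - a)) by (apply Rmult_le_pos; auto).
    lra.
Qed.

Lemma energy_ge delta alpha omega r hw : admissible_delta delta -> is_solution delta alpha (Finite omega) r ->
  filterlim (energy r) (at_left omega) (locally hw) ->
  forall t : R, Rbar_lt alpha t -> t < omega -> hw <= energy r t.
Proof.
  intros Ha Hs Hl t H1 H2. destruct (Rle_dec hw (energy r t)) as [|Hn]; auto. exfalso.
  destruct (proj1 (left_lim_eps _ _ _) Hl (hw - energy r t)) as [d [Hd H]]; [lra|].
  set (s := Rmax ((t + omega) / 2) (omega - d / 2)).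
  assert (Hs1 : (t + omega) / 2 <= s) by apply Rmax_l.
  assert (Hs2 : omega - d / 2 <= s) by apply Rmax_r.
  assert (Hs3 : s < omega) by (unfold s, Rmax; destruct Rle_dec; lra).
  specialize (H s ltac:(lra)).
  pose proof (energy_mono delta alpha omega r Ha Hs t s H1 ltac:(lra) Hs3).
  revert H; unfold Rabs; destruct Rcase_abs; intros; lra.
Qed.

Lemma rp2 r t : 0 < r t -> (Derive r t) ^ 2 = 2 * energy r t + 2 / r t.
Proof. intros. unfold energy. field. lra. Qed.

Lemma min_deriv0 (f : R -> R) a b c l : a < c < b -> is_derive f c l ->
  (forall x, a < x < b -> f c <= f x) -> l = 0.
Proof.
  intros Hc Hd Hm. pose proof (proj1 (is_derive_Reals f c l) Hd) as Hd'.
  change l with (derive_pt f c (exist _ l Hd')).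
  apply (deriv_minimum f a b c); try lra. intros x H1 H2; apply Hm; lra.
Qed.

Lemma max_deriv0 (f : R -> R) a b c l : a < c < b -> is_derive f c l ->
  (forall x, a < x < b -> f x <= f c) -> l = 0.
Proof.
  intros Hc Hd Hm. pose proof (proj1 (is_derive_Reals f c l) Hd) as Hd'.
  change l with (derive_pt f c (exist _ l Hd')).
  apply (deriv_maximum f a b c); try lra. intros x H1 H2; apply Hm; lra.
Qed.

Lemma pos_deriv_right (f : R -> R) t d : is_derive f t d -> 0 < d ->
  exists e, 0 < e /\ forall x, t < x < t + e -> f t < f x.
Proof.
  intros Hd Hp. pose proof (proj1 (is_derive_Reals f t d) Hd) as H.
  destruct (H (d / 2)) as [e He]; [lra|]. exists e. split. apply cond_pos.
  intros x Hx. specialize (He (x - t) ltac:(lra)).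
  rewrite Rabs_right in He by lra. specialize (He ltac:(lra)).
  replace (t + (x - t)) with x in He by ring.
  assert (Hq : d / 2 < (f x - f t) / (x - t)) by (revert He; unfold Rabs; destruct Rcase_abs; intros; lra).
  assert (0 < (f x - f t) / (x - t)) by lra.
  assert (0 < x - t) by lra.
  assert (0 < f x - f t). { apply Rmult_lt_reg_r with (/ (x - t)). apply Rinv_0_lt_compat; lra.
    rewrite Rmult_0_l. exact H0. }
  lra.
Qed.


Lemma yr_der delta lo hi (r : R -> R) s : admissible_delta delta -> 0 < lo -> odeP delta r s -> lo < r s < hi ->
  is_derive (fun s => Derive r s + Dl delta lo (cl lo hi (r s))) s (- / (r s ^ 2)).
Proof.
  intros Ha Hlo [P [E1 [E2 Eq]]] Hb.
  assert (Hc : continuous r s) by (apply (ex_derive_continuous (K := R_AbsRing) (V := R_NormedModule)); auto).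
  pose proof (loc_cl r s lo hi Hc Hb) as L.
  apply (is_derive_ext_loc (fun s => Derive r s + Dl delta lo (r s))).
  { eapply filter_imp; [|exact L]. intros x Hx. simpl. rewrite Hx. reflexivity. }
  replace (- / (r s ^ 2)) with (plus (Derive (Derive r) s) (scal (Derive r s) (delta (r s)))).
  2:{ rewrite <- Eq. unfold plus, scal; simpl; unfold mult; simpl. ring. }
  apply (is_derive_plus (Derive r) (fun s => Dl delta lo (r s))).
  apply Derive_correct; auto.
  apply (is_derive_comp (Dl delta lo) r). apply Dl_der; auto; lra. apply Derive_correct; auto.
Qed.

Lemma extend delta alpha (omega : R) r : admissible_delta delta -> is_solution delta alpha omega r ->
  maximal_right delta alpha omega r ->
  forall c T0 : R, 0 < c -> Rbar_lt alpha T0 -> T0 < omega -> (forall t, T0 < t < omega -> c <= r t) -> False.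
Proof.
  intros Ha Hs Hmr c T0 Hc HT0 HT0w Hlow.
  pose proof Ha as [Hpos [[M HM] Hd]].
  assert (HM0 : 0 <= M) by (specialize (HM 1 Rlt_0_1); pose proof (Rabs_pos (delta 1)); lra).
  set (T1 := (T0 + omega) / 2).
  assert (HT1 : Rbar_lt alpha T1) by (apply Rbar_lt_le_R with T0; [auto|unfold T1; lra]).
  assert (HT1w : T1 < omega) by (unfold T1; lra).
  assert (HI : forall t, T1 <= t -> Rbar_lt alpha t) by (intros; apply Rbar_lt_le_R with T1; auto).
  assert (Hlow' : forall t, T1 <= t < omega -> c <= r t) by (intros t Ht; apply Hlow; unfold T1 in *; lra).
  set (e1 := energy r T1).
  set (B1 := 2 * Rabs e1 + 2 / c + 1).
  assert (HB1p : 1 <= B1).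
  { unfold B1. pose proof (Rabs_pos e1). assert (0 < 2 / c) by (apply Rdiv_lt_0_compat; lra). lra. }
  assert (HB1 : forall t, T1 <= t < omega -> Rabs (Derive r t) <= B1).
  { intros t Ht. destruct (sol_at delta alpha omega r t Hs (HI t ltac:(lra)) ltac:(lra)) as [P _].
    pose proof (rp2 r t P) as E.
    pose proof (energy_mono delta alpha omega r Ha Hs T1 t HT1 ltac:(lra) ltac:(lra)) as Em. fold e1 in Em.
    assert (/ r t <= / c) by (apply Rinv_le_contravar; auto; apply Hlow'; lra).
    assert (Derive r t ^ 2 <= B1 - 1).
    { rewrite E. unfold B1. pose proof (Rle_abs e1). unfold Rdiv. lra. }
    apply Rnot_lt_le. intros Hlt. rewrite <- pow2_abs in H0.
    assert (B1 * B1 < Rabs (Derive r t) ^ 2) by (simpl; nra). nra. }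
  set (R2 := r T1 + B1 * (omega - T1)).
  assert (HR2 : forall t, T1 <= t < omega -> r t <= R2).
  { intros t Ht. destruct (MVT_gen r T1 t (Derive r)) as [c0 [Hc0 Eq]].
    - intros x Hx. rewrite Rmin_left, Rmax_right in Hx by lra. apply Derive_correct.
      apply (sol_at delta alpha omega r x Hs (HI x ltac:(lra)) ltac:(lra)).
    - intros x Hx. rewrite Rmin_left, Rmax_right in Hx by lra. eapply der_cpt. apply Derive_correct.
      apply (sol_at delta alpha omega r x Hs (HI x ltac:(lra)) ltac:(lra)).
    - rewrite Rmin_left, Rmax_right in Hc0 by lra.
      pose proof (HB1 c0 ltac:(lra)). unfold R2.
      assert (Derive r c0 * (t - T1) <= B1 * (omega - T1)).
      { apply Rle_trans with (Rabs (Derive r c0) * (t - T1)).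
        apply Rmult_le_compat_r; [lra|apply Rle_abs]. apply Rmult_le_compat; try lra. apply Rabs_pos. }
      lra. }
  assert (HrT1 : c <= r T1) by (apply Hlow'; lra).
  assert (HcR2 : c <= R2) by (unfold R2; assert (0 <= B1 * (omega - T1)) by (apply Rmult_le_pos; lra); lra).
  set (lo := c / 2). set (hi := 2 * R2).
  assert (Hlo : 0 < lo) by (unfold lo; lra).
  assert (Hlh : lo <= hi) by (unfold lo, hi; lra).
  assert (Hrange : forall t, T1 <= t < omega -> lo < r t < hi).
  { intros t Ht. pose proof (Hlow' t Ht). pose proof (HR2 t Ht). unfold lo, hi; lra. }
  set (K := 1 + M + 2 * hi / lo ^ 4).
  assert (HK : 0 < K). { unfold K. assert (0 <= 2 * hi / lo ^ 4). apply Rdiv_le_0_compat. lra.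
    apply pow_lt; lra. lra. }
  pose proof (sys_lip delta lo hi M Ha Hlo Hlh HM0 HM) as HL. fold K in HL.
  set (h := / (4 * K)).
  assert (Hh : 0 < h) by (unfold h; apply Rinv_0_lt_compat; lra).
  set (t1 := Rmax T1 (omega - h / 2)).
  assert (Ht1a : T1 <= t1) by apply Rmax_l.
  assert (Ht1b : omega - h / 2 <= t1) by apply Rmax_r.
  assert (Ht1c : t1 < omega) by (unfold t1, Rmax; destruct Rle_dec; lra).
  set (yr := fun s => Derive r s + Dl delta lo (cl lo hi (r s))).
  destruct (picard_exist (FF1 delta lo hi) (FF2 lo hi) K t1 (r t1) (yr t1) HK HL) as [u [v [Hu0 [Hv0 Hder]]]].
  fold h in Hder.
  assert (Agree : forall t, t1 <= t < omega -> u t = r t /\ v t = yr t).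
  { intros t Ht.
    assert (D : forall s, t1 <= s <= t -> is_derive u s (FF1 delta lo hi (u s) (v s)) /\ is_derive v s (FF2 lo hi (u s) (v s)) /\
      is_derive r s (FF1 delta lo hi (r s) (yr s)) /\ is_derive yr s (FF2 lo hi (r s) (yr s))).
    { intros s Hs'. assert (Od : odeP delta r s) by apply (sol_at delta alpha omega r s Hs (HI s ltac:(lra)) ltac:(lra)).
      assert (Hsh : Rabs (s - t1) < h) by (rewrite Rabs_right; lra).
      destruct (Hder s Hsh) as [D1 D2]. pose proof (Hrange s ltac:(lra)) as Rg.
      split; [exact D1|split; [exact D2|split]].
      - unfold FF1, yr. replace (Derive r s + Dl delta lo (cl lo hi (r s)) - Dl delta lo (cl lo hi (r s))) with (Derive r s) by ring.
        apply Derive_correct. apply Od.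
      - unfold FF2. rewrite cl_id by lra. apply yr_der; auto. }
    exact (picard_uniq (FF1 delta lo hi) (FF2 lo hi) K u v r yr t1 t HK HL ltac:(lra) ltac:(fold h; lra) D Hu0 Hv0 t ltac:(lra)). }
  assert (Hcu : continuous u omega).
  { eapply der_cont. apply (Hder omega). rewrite Rabs_right; lra. }
  assert (Huw : c <= u omega <= R2).
  { split; apply Rnot_lt_le; intro Hlt.
    - destruct (proj1 (cont_eps u omega) Hcu (c - u omega)) as [d0 [Hd0 H0]]; [lra|].
      set (s := Rmax t1 (omega - d0 / 2)).
      assert (s1 : t1 <= s) by apply Rmax_l. assert (s2 : omega - d0 / 2 <= s) by apply Rmax_r.
      assert (s3 : s < omega) by (unfold s, Rmax; destruct Rle_dec; lra).
      specialize (H0 s ltac:(rewrite Rabs_left; lra)). destruct (Agree s ltac:(lra)) as [A1 _].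
      pose proof (Hlow' s ltac:(lra)). revert H0; unfold Rabs; destruct Rcase_abs; intros; lra.
    - destruct (proj1 (cont_eps u omega) Hcu (u omega - R2)) as [d0 [Hd0 H0]]; [lra|].
      set (s := Rmax t1 (omega - d0 / 2)).
      assert (s1 : t1 <= s) by apply Rmax_l. assert (s2 : omega - d0 / 2 <= s) by apply Rmax_r.
      assert (s3 : s < omega) by (unfold s, Rmax; destruct Rle_dec; lra).
      specialize (H0 s ltac:(rewrite Rabs_left; lra)). destruct (Agree s ltac:(lra)) as [A1 _].
      pose proof (HR2 s ltac:(lra)). revert H0; unfold Rabs; destruct Rcase_abs; intros; lra. }
  destruct (proj1 (cont_eps u omega) Hcu (Rmin (u omega - lo) (hi - u omega))) as [du [Hdu Hu]].
  { apply Rmin_pos; unfold lo, hi in *; lra. }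
  pose proof (Rmin_l (u omega - lo) (hi - u omega)). pose proof (Rmin_r (u omega - lo) (hi - u omega)).
  set (eps := Rmin du (h / 2)).
  assert (He : 0 < eps) by (apply Rmin_pos; lra).
  assert (He1 : eps <= du) by apply Rmin_l. assert (He2 : eps <= h / 2) by apply Rmin_r.
  set (a0 := Rmax t1 (omega - eps)).
  assert (Ha01 : t1 <= a0) by apply Rmax_l. assert (Ha02 : omega - eps <= a0) by apply Rmax_r.
  assert (Ha03 : a0 < omega) by (unfold a0, Rmax; destruct Rle_dec; lra).
  assert (HW : forall s, a0 < s < omega + eps -> (lo < u s < hi) /\ Rabs (s - t1) < h).
  { intros s Hs'. split.
    - assert (Rabs (s - omega) < du) by (unfold Rabs; destruct Rcase_abs; lra).
      specialize (Hu s H1). revert Hu; unfold Rabs; destruct Rcase_abs; intros; lra.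
    - rewrite Rabs_right; lra. }
  set (ext := fun t => if Rlt_dec t omega then r t else u t).
  assert (HextW : forall s, a0 < s < omega + eps -> ext s = u s).
  { intros s Hs'. unfold ext. destruct Rlt_dec; auto. symmetry; apply Agree; lra. }
  apply (Hmr (Finite (omega + eps))). simpl; lra.
  exists ext. split.
  - intros t Ht1' Ht2'. destruct t as [t| |]; [|simpl in Ht2'; contradiction|destruct alpha; simpl in Ht1'; contradiction].
    simpl in Ht2'. change (real (Finite t)) with t.
    cut (odeP delta ext t). { unfold odeP; auto. }
    destruct (Rlt_dec t omega) as [Hlt|Hge].
    + apply (transfer delta ext r t (omega - t)). lra.
      intros x Hx. unfold ext. destruct Rlt_dec; auto. exfalso. revert Hx; unfold Rabs; destruct Rcase_abs; intros; lra.
      apply (sol_at delta alpha omega r t Hs Ht1' Hlt).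
    + assert (Hrho : 0 < Rmin (t - a0) (omega + eps - t)) by (apply Rmin_pos; lra).
      pose proof (Rmin_l (t - a0) (omega + eps - t)). pose proof (Rmin_r (t - a0) (omega + eps - t)).
      assert (InW : forall x, Rabs (x - t) < Rmin (t - a0) (omega + eps - t) -> a0 < x < omega + eps).
      { intros x Hx. revert Hx; unfold Rabs; destruct Rcase_abs; intros; lra. }
      apply (transfer delta ext u t _ Hrho).
      intros x Hx. apply HextW. apply InW; auto.
      apply (sys_to_ode delta lo hi u v t _ Ha Hlo Hlh Hrho).
      intros s Hs'. destruct (HW s (InW s Hs')) as [Rg Hst]. destruct (Hder s Hst) as [D1 D2]. auto.
  - intros t H1' H2'. destruct t as [t| |]; [|simpl in H2'; contradiction|destruct alpha; simpl in H1'; contradiction].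
    simpl. unfold ext. destruct Rlt_dec; auto. simpl in H2'. contradiction.
Qed.


Lemma rp_big delta alpha (omega : R) r hw : admissible_delta delta -> is_solution delta alpha omega r ->
  filterlim (energy r) (at_left omega) (locally hw) ->
  forall t : R, Rbar_lt alpha t -> t < omega -> r t <= / (Rabs hw + 1) -> 2 <= (Derive r t) ^ 2.
Proof.
  intros Ha Hs Hl t H1 H2 H3. destruct (sol_at delta alpha omega r t Hs H1 H2) as [P _].
  rewrite (rp2 r t P). pose proof (energy_ge delta alpha omega r hw Ha Hs Hl t H1 H2).
  assert (Rabs hw + 1 <= / r t).
  { rewrite <- (Rinv_inv (Rabs hw + 1)). apply Rinv_le_contravar; auto. }
  pose proof (Rle_abs (- hw)). rewrite Rabs_Ropp in H4. unfold Rdiv. lra.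
Qed.

Lemma cpt_sol delta alpha (omega : R) r (x : R) : is_solution delta alpha omega r ->
  Rbar_lt alpha x -> x < omega -> continuity_pt r x.
Proof. intros Hs H1 H2. eapply der_cpt. apply Derive_correct. apply (sol_at delta alpha omega r x Hs H1 H2). Qed.

Lemma lower_bound delta alpha (omega : R) r hw : admissible_delta delta -> Rbar_lt alpha omega ->
  is_solution delta alpha omega r ->
  filterlim (energy r) (at_left omega) (locally hw) ->
  forall eta, 0 < eta -> (forall T : R, Rbar_lt alpha T -> T < omega -> exists t, T < t < omega /\ eta <= r t) ->
  exists c T0 : R, 0 < c /\ Rbar_lt alpha T0 /\ T0 < omega /\ forall t, T0 < t < omega -> c <= r t.
Proof.
  intros Ha Haw Hs Hl eta He Hfreq.
  destruct (interior_pt alpha omega Haw) as [T [HT1 HT2]].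
  destruct (Hfreq T HT1 HT2) as [T0 [[H1 H2] H3]].
  assert (HT0 : Rbar_lt alpha T0) by (apply Rbar_lt_le_R with T; auto; lra).
  assert (Hc0 : 0 < / (Rabs hw + 1)) by (apply Rinv_0_lt_compat; pose proof (Rabs_pos hw); lra).
  exists (Rmin eta (/ (Rabs hw + 1))), T0. split. apply Rmin_pos; lra. split; auto. split; auto.
  intros t Ht. apply Rnot_lt_le. intros Hlt.
  assert (Hta : Rbar_lt alpha t) by (apply Rbar_lt_le_R with T0; auto; lra).
  destruct (Hfreq t Hta ltac:(lra)) as [t2 [[H4 H5] H6]].
  destruct (continuity_ab_min r T0 t2 ltac:(lra)) as [xi [Hmin Hxi]].
  { intros x Hx. apply (cpt_sol delta alpha omega r x Hs); [apply Rbar_lt_le_R with T0; auto; lra|lra]. }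
  pose proof (Rmin_l eta (/ (Rabs hw + 1))). pose proof (Rmin_r eta (/ (Rabs hw + 1))).
  pose proof (Hmin t ltac:(lra)).
  assert (xi <> T0) by (intro E; subst xi; lra).
  assert (xi <> t2) by (intro E; subst xi; lra).
  assert (Hxa : Rbar_lt alpha xi) by (apply Rbar_lt_le_R with T0; auto; lra).
  assert (Z : Derive r xi = 0).
  { apply (min_deriv0 r T0 t2 xi). lra. apply Derive_correct. apply (sol_at delta alpha omega r xi Hs Hxa ltac:(lra)).
    intros x Hx; apply Hmin; lra. }
  pose proof (rp_big delta alpha omega r hw Ha Hs Hl xi Hxa ltac:(lra) ltac:(lra)).
  rewrite Z in H10. simpl in H10. lra.
Qed.


Lemma sqrt_diff_le a b : 0 <= a -> 0 < b -> Rabs (sqrt a - sqrt b) <= Rabs (a - b) / sqrt b.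
Proof.
  intros Ha Hb. pose proof (sqrt_lt_R0 b Hb). pose proof (sqrt_positivity a Ha).
  replace (a - b) with ((sqrt a - sqrt b) * (sqrt a + sqrt b)).
  2:{ pose proof (sqrt_sqrt a Ha). pose proof (sqrt_sqrt b ltac:(lra)). nra. }
  rewrite Rabs_mult. rewrite (Rabs_right (sqrt a + sqrt b)) by lra.
  unfold Rdiv. rewrite Rmult_assoc.
  rewrite <- (Rmult_1_r (Rabs (sqrt a - sqrt b))) at 1.
  apply Rmult_le_compat_l. apply Rabs_pos.
  apply Rmult_le_reg_r with (sqrt b); auto. rewrite Rmult_assoc, Rinv_l by lra. lra.
Qed.

Lemma pow_identity (x w : R) : 0 < x -> 0 < w ->
  Rpower (x * sqrt x / w) (2 / 3) = x / Rpower w (2 / 3).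
Proof.
  intros Hx Hw.
  assert (E1 : x * sqrt x = Rpower x (1 + / 2)).
  { rewrite Rpower_plus, Rpower_1 by auto. rewrite Rpower_sqrt; auto. }
  assert (E2 : / w = Rpower w (Ropp 1)).
  { rewrite Rpower_Ropp, Rpower_1; auto. }
  unfold Rdiv. rewrite E1, E2.
  rewrite <- Rpower_mult_distr by (apply exp_pos).
  rewrite !Rpower_mult. replace ((1 + / 2) * (2 * / 3)) with 1 by field.
  rewrite Rpower_1 by auto. replace (Ropp 1 * (2 * / 3)) with (Ropp (2 * / 3)) by ring.
  rewrite Rpower_Ropp. reflexivity.
Qed.

Lemma k_identity : Rpower (3 / 2 * sqrt 2) (2 / 3) = Rpower (9 / 2) (1 / 3).
Proof.
  assert (E : 3 / 2 * sqrt 2 = Rpower (9 / 2) (/ 2)).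
  { rewrite Rpower_sqrt by lra. replace (9 / 2) with ((3 / 2 * 3 / 2) * 2) by field.
    rewrite sqrt_mult by lra. f_equal. replace (3 / 2 * 3 / 2) with ((3/2) * (3/2)) by field.
    rewrite sqrt_square; lra. }
  rewrite E, Rpower_mult. f_equal. field.
Qed.

Lemma phi_der (r : R -> R) t : 0 < r t -> ex_derive r t ->
  is_derive (fun t => r t * sqrt (r t)) t (3 / 2 * sqrt (r t) * Derive r t).
Proof.
  intros P E. pose proof (Derive_correct _ _ E) as D.
  pose proof (is_derive_sqrt r t (Derive r t) D P) as Ds.
  pose proof (is_derive_mult r (fun t => sqrt (r t)) t _ _ D Ds ltac:(intros; apply Rmult_comm)) as M.
  replace (3 / 2 * sqrt (r t) * Derive r t) with (plus (mult (Derive r t) (sqrt (r t)))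
       (mult (r t) (Derive r t / (2 * sqrt (r t))))).
  exact M.
  unfold plus, mult; simpl. pose proof (sqrt_lt_R0 _ P). pose proof (sqrt_sqrt (r t) ltac:(lra)).
  field_simplify; [|lra]. rewrite <- H0 at 2. field. lra.
Qed.

Lemma caseA delta alpha (omega : R) r hw : admissible_delta delta -> Rbar_lt alpha omega ->
  is_solution delta alpha omega r ->
  filterlim (energy r) (at_left omega) (locally hw) ->
  (forall eta, 0 < eta -> exists T : R, Rbar_lt alpha T /\ T < omega /\ forall t, T < t < omega -> r t < eta) ->
  filterlim (fun t => r t / Rpower (omega - t) (2 / 3)) (at_left omega) (locally (Rpower (9 / 2) (1 / 3))).
Proof.
  intros Ha Haw Hs Hl Hz.
  set (c0 := / (Rabs hw + 1)).
  assert (Hc0 : 0 < c0) by (unfold c0; apply Rinv_0_lt_compat; pose proof (Rabs_pos hw); lra).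
  destruct (Hz c0 Hc0) as [T [HTa [HTw HT]]].
  assert (HI : forall t, T <= t -> Rbar_lt alpha t) by (intros; apply Rbar_lt_le_R with T; auto).
  assert (Od : forall t, T < t < omega -> odeP delta r t).
  { intros t Ht. apply (sol_at delta alpha omega r t Hs (HI t ltac:(lra)) ltac:(lra)). }
  assert (Neg : forall t, T < t < omega -> Derive r t < 0).
  { intros t Ht. apply Rnot_le_lt. intro Hge.
    destruct (Od t Ht) as [P [E _]].
    pose proof (rp_big delta alpha omega r hw Ha Hs Hl t (HI t ltac:(lra)) ltac:(lra) (Rlt_le _ _ (HT t Ht))) as B.
    assert (Hp : 0 < Derive r t).
    { destruct Hge as [|E0]; auto. rewrite <- E0 in B. simpl in B. lra. }
    destruct (pos_deriv_right r t (Derive r t) (Derive_correct _ _ E) Hp) as [e [He Hinc]].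
    set (t' := Rmin (t + e / 2) ((t + omega) / 2)).
    assert (t'1 : t < t') by (unfold t', Rmin; destruct Rle_dec; lra).
    assert (t'2 : t' < omega) by (unfold t', Rmin; destruct Rle_dec; lra).
    assert (t'3 : t' < t + e) by (unfold t', Rmin; destruct Rle_dec; lra).
    pose proof (Hinc t' ltac:(lra)) as Hrt'.
    destruct (Hz (r t) P) as [T' [HT'a [HT'w HT']]].
    set (s := Rmax ((t' + omega) / 2) ((T' + omega) / 2)).
    assert (s1 : (t' + omega) / 2 <= s) by apply Rmax_l. assert (s2 : (T' + omega) / 2 <= s) by apply Rmax_r.
    assert (s3 : s < omega) by (unfold s, Rmax; destruct Rle_dec; lra).
    pose proof (HT' s ltac:(lra)) as Hrs.
    destruct (continuity_ab_maj r t s ltac:(lra)) as [xi [Hmax Hxi]].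
    { intros x Hx. apply (cpt_sol delta alpha omega r x Hs (HI x ltac:(lra)) ltac:(lra)). }
    pose proof (Hmax t' ltac:(lra)).
    assert (xi <> t) by (intro E0; subst xi; lra).
    assert (xi <> s) by (intro E0; subst xi; lra).
    assert (Z : Derive r xi = 0).
    { apply (max_deriv0 r t s xi). lra. apply Derive_correct. apply (Od xi ltac:(lra)).
      intros x Hx; apply Hmax; lra. }
    pose proof (rp_big delta alpha omega r hw Ha Hs Hl xi (HI xi ltac:(lra)) ltac:(lra) (Rlt_le _ _ (HT xi ltac:(lra)))).
    rewrite Z in H2. simpl in H2. lra. }
  set (T1 := (T + omega) / 2).
  assert (HT1 : T < T1 < omega) by (unfold T1; lra).
  set (Eb := Rabs hw + Rabs (energy r T1)).
  assert (HEb : forall t, T1 <= t < omega -> Rabs (energy r t) <= Eb).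
  { intros t Ht. pose proof (energy_ge delta alpha omega r hw Ha Hs Hl t (HI t ltac:(lra)) ltac:(lra)) as G1.
    pose proof (energy_mono delta alpha omega r Ha Hs T1 t (HI T1 ltac:(lra)) ltac:(lra) ltac:(lra)) as G2.
    unfold Eb. pose proof (Rle_abs (energy r T1)) as G3. pose proof (Rle_abs (- hw)) as G4. rewrite Rabs_Ropp in G4.
    pose proof (Rabs_pos hw). pose proof (Rabs_pos (energy r T1)).
    apply Rabs_le; split; lra. }
  assert (HEb0 : 0 <= Eb) by (unfold Eb; pose proof (Rabs_pos hw); pose proof (Rabs_pos (energy r T1)); lra).
  set (k := 3 / 2 * sqrt 2).
  assert (Hs2 : 1 <= sqrt 2 <= 2).
  { pose proof (sqrt_sqrt 2 ltac:(lra)). pose proof (sqrt_pos 2). nra. }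
  assert (Hk : 0 < k <= 3) by (unfold k; lra).
  set (phi := fun t => r t * sqrt (r t)).
  assert (Dphi : forall t, T < t < omega -> is_derive phi t (3 / 2 * sqrt (r t) * Derive r t)).
  { intros t Ht. destruct (Od t Ht) as [P [E _]]. apply phi_der; auto. }
  assert (Bphi : forall t, T1 <= t < omega -> Rabs (3 / 2 * sqrt (r t) * Derive r t + k) <= 3 * Eb * r t).
  { intros t Ht. destruct (Od t ltac:(lra)) as [P _].
    pose proof (Neg t ltac:(lra)) as Nt.
    set (X := 2 * energy r t * r t + 2).
    assert (HX : X = r t * Derive r t ^ 2) by (unfold X; rewrite (rp2 r t P); field; lra).
    assert (HX0 : 0 <= X) by (rewrite HX; apply Rmult_le_pos; [lra|apply pow2_ge_0]).
    assert (Sq : sqrt X = sqrt (r t) * (- Derive r t)).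
    { rewrite HX, sqrt_mult by (try lra; apply pow2_ge_0). f_equal.
      rewrite <- Rsqr_pow2, sqrt_Rsqr_abs. rewrite Rabs_left; lra. }
    replace (3 / 2 * sqrt (r t) * Derive r t + k) with (3 / 2 * (sqrt 2 - sqrt X)) by (unfold k; rewrite Sq; ring).
    rewrite Rabs_mult, Rabs_right by lra. rewrite Rabs_minus_sym.
    pose proof (sqrt_diff_le X 2 HX0 ltac:(lra)).
    assert (Rabs (X - 2) / sqrt 2 <= Rabs (X - 2)).
    { unfold Rdiv. rewrite <- (Rmult_1_r (Rabs (X - 2))) at 2. apply Rmult_le_compat_l. apply Rabs_pos.
      rewrite <- Rinv_1. apply Rinv_le_contravar; lra. }
    assert (Rabs (X - 2) <= 2 * Eb * r t).
    { unfold X. replace (2 * energy r t * r t + 2 - 2) with (2 * r t * energy r t) by ring.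
      rewrite !Rabs_mult. rewrite (Rabs_right 2), (Rabs_right (r t)) by lra.
      pose proof (HEb t Ht). nra. }
    lra. }
  assert (Main : forall eps, 0 < eps -> exists T2, (T1 <= T2 < omega) /\
     forall t, T2 < t < omega -> Rabs (phi t - k * (omega - t)) <= eps * (omega - t)).
  { intros eps He.
    destruct (Hz (eps / (3 * Eb + 1))) as [T2' [_ [HT2'w HT2']]]. { apply Rdiv_lt_0_compat; lra. }
    exists (Rmax T1 T2'). split. split. apply Rmax_l. unfold Rmax; destruct Rle_dec; lra.
    intros t Ht. pose proof (Rmax_l T1 T2'). pose proof (Rmax_r T1 T2').
    apply Rle_plus_epsilon. intros eta Heta.
    destruct (Hz (Rmin 1 (eta / 2))) as [T3 [_ [HT3w HT3]]]. { apply Rmin_pos; lra. }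
    set (s := Rmax (Rmax ((t + omega) / 2) ((T3 + omega) / 2)) (omega - eta / 8)).
    assert (s1 : (t + omega) / 2 <= s) by (eapply Rle_trans; [apply Rmax_l|apply Rmax_l]).
    assert (s2 : (T3 + omega) / 2 <= s) by (eapply Rle_trans; [apply Rmax_r|apply Rmax_l]).
    assert (s3 : omega - eta / 8 <= s) by apply Rmax_r.
    assert (s4 : s < omega) by (unfold s, Rmax; repeat destruct Rle_dec; lra).
    destruct (MVT_gen phi t s (fun x => 3 / 2 * sqrt (r x) * Derive r x)) as [xi [Hxi Eq]].
    - intros x Hx. rewrite Rmin_left, Rmax_right in Hx by lra. apply Dphi; lra.
    - intros x Hx. rewrite Rmin_left, Rmax_right in Hx by lra. eapply der_cpt. apply Dphi; lra.
    - rewrite Rmin_left, Rmax_right in Hxi by lra.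
      pose proof (Bphi xi ltac:(lra)) as Bx.
      pose proof (HT2' xi ltac:(lra)) as Rx.
      assert (Dx : Rabs (3 / 2 * sqrt (r xi) * Derive r xi + k) <= eps).
      { eapply Rle_trans; [exact Bx|]. destruct (Od xi ltac:(lra)) as [Px _].
        apply Rle_trans with (3 * Eb * (eps / (3 * Eb + 1))).
        apply Rmult_le_compat_l; lra.
        replace (3 * Eb * (eps / (3 * Eb + 1))) with (eps * (3 * Eb / (3 * Eb + 1))) by (field; lra).
        rewrite <- (Rmult_1_r eps) at 2. apply Rmult_le_compat_l; [lra|].
        apply Rmult_le_reg_r with (3 * Eb + 1); [lra|]. unfold Rdiv. rewrite Rmult_assoc, Rinv_l by lra. lra. }
      pose proof (HT3 s ltac:(lra)) as Rs.
      pose proof (Rmin_l 1 (eta / 2)). pose proof (Rmin_r 1 (eta / 2)).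
      destruct (Od s ltac:(lra)) as [Ps _].
      assert (Hphs : 0 <= phi s <= r s).
      { unfold phi. pose proof (sqrt_pos (r s)).
        assert (sqrt (r s) <= 1) by (rewrite <- sqrt_1; apply sqrt_le_1_alt; lra). nra. }
      assert (Eq' : phi t = phi s - 3 / 2 * sqrt (r xi) * Derive r xi * (s - t)) by lra.
      set (D := 3 / 2 * sqrt (r xi) * Derive r xi + k) in *.
      assert (E2 : phi t - k * (omega - t) = phi s - D * (s - t) - k * (omega - s)) by (unfold D; rewrite Eq'; ring).
      rewrite E2. revert Dx; unfold Rabs; repeat destruct Rcase_abs; intros; nra. }
  apply left_lim_eps. intros eps He.
  assert (Cp : continuous (fun x => Rpower x (2 / 3)) k).
  { apply continuity_pt_filterlim. apply derivable_continuous_pt. eexists.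
    apply derivable_pt_lim_power; lra. }
  destruct (proj1 (cont_eps _ k) Cp eps He) as [d1 [Hd1 Hc1]].
  destruct (Main (d1 / 2) ltac:(lra)) as [T2 [HT2 HM]].
  exists (omega - T2). split. lra. intros t Ht.
  destruct (Od t ltac:(lra)) as [P _].
  rewrite <- pow_identity by lra. rewrite <- k_identity.
  apply Hc1. fold (phi t).
  replace (phi t / (omega - t) - k) with ((phi t - k * (omega - t)) / (omega - t)) by (field; lra).
  unfold Rdiv. rewrite Rabs_mult, (Rabs_right (/ (omega - t))).
  2: { apply Rle_ge; left; apply Rinv_0_lt_compat; lra. }
  apply Rle_lt_trans with (d1 / 2 * (omega - t) * / (omega - t)).
  apply Rmult_le_compat_r. left; apply Rinv_0_lt_compat; lra. apply HM; lra.
  replace (d1 / 2 * (omega - t) * / (omega - t)) with (d1 / 2) by (field; lra). lra.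
Qed.

Theorem corollary8p2 (delta : R -> R) (alpha : Rbar) (omega : R) (r : R -> R) :
  admissible_delta delta ->
  Rbar_lt alpha omega ->
  is_solution delta alpha omega r ->
  maximal_left delta alpha omega r ->
  maximal_right delta alpha omega r ->
  (exists hw : R, filterlim (energy r) (at_left omega) (locally hw)) ->
  filterlim (fun t => r t / Rpower (omega - t) (2 / 3))
    (at_left omega) (locally (Rpower (9 / 2) (1 / 3))).
Proof.
  intros Ha Haw Hs Hml Hmr [hw Hl].
  destruct (classic (forall eta, 0 < eta -> exists T : R, Rbar_lt alpha T /\ T < omega /\
                       forall t, T < t < omega -> r t < eta)) as [Hz|Hn].
  - apply (caseA delta alpha omega r hw); auto.
  - exfalso.
    assert (Hfreq : exists eta, 0 < eta /\ forall T : R, Rbar_lt alpha T -> T < omega ->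
                      exists t, T < t < omega /\ eta <= r t).
    { apply NNPP. intro Hc. apply Hn. intros eta Heta. apply NNPP. intro Hc2. apply Hc.
      exists eta. split; auto. intros T HT1 HT2. apply NNPP. intro Hc3. apply Hc2.
      exists T. split; auto. split; auto. intros t Ht. apply Rnot_le_lt. intro Hle. apply Hc3.
      exists t. auto. }
    destruct Hfreq as [eta [Heta Hf]].
    destruct (lower_bound delta alpha omega r hw Ha Haw Hs Hl eta Heta Hf) as [c [T0 [Hc [HT0 [HT0w Hlow]]]]].
    apply (extend delta alpha omega r Ha Hs Hmr c T0 Hc HT0 HT0w Hlow).
Qed.
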